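(* Let $\alpha>-1$ with $\alpha\neq-\tfrac12$, $M\ge0$, and for $n=0,1,2,\ldots$ let $$P_n^{\alpha,\alpha,M,M}(x)=C_0P_n^{(\alpha,\alpha)}(x)-C_1x\frac{d}{dx}P_n^{(\alpha,\alpha)}(x),$$ where $$C_0=1+M\frac{2n}{\alpha+1}\binom{n+2\alpha+1}{n}+4M^2\binom{n+2\alpha+1}{n-1}^2,\qquad C_1=\frac{2M}{2\alpha+1}\binom{n+2\alpha}{n}+\frac{2M^2}{\alpha+1}\binom{n+2\alpha}{n-1}\binom{n+2\alpha+1}{n}.$$ Then $y=P_n^{\alpha,\alpha,M,M}$ satisfies the linear infinite order differential equation $$\sum_{i=0}^\infty b_i(x)y^{(i)}(x)=0,$$ where $b_0(x)=b_0(n,\alpha,x)=\tfrac12\big[1-(-1)^n\big]$ and $b_i(x)=\frac{2^{i-1}}{i!}(-x)^i$ for $i=1,2,3,\ldots$.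
   Context: $P_n^{(\alpha,\alpha)}(x)=\binom{n+\alpha}{n}\,{}_2F_1\!\left(\begin{matrix}-n,\;n+2\alpha+1\\ \alpha+1\end{matrix};\frac{1-x}{2}\right)$ is the classical symmetric Jacobi polynomial; $\binom{\gamma}{m}$ is the generalized binomial coefficient (zero for $m<0$). $P_n^{\alpha,\alpha,M,M}$ are Koornwinder's generalized Jacobi polynomials orthogonal on $[-1,1]$ with respect to $\frac{\Gamma(2\alpha+2)}{2^{2\alpha+1}\Gamma(\alpha+1)^2}(1-x^2)^\alpha+M\delta(x+1)+M\delta(x-1)$. The sum is finite on polynomials. *)

(* Defs.v *)
From HB Require Import structures.
From mathcomp Require Import all_boot all_order all_algebra.
From mathcomp Require Import all_classical all_reals.
Set Implicit Arguments. Unset Strict Implicit. Unset Printing Implicit Defensive.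
Import Order.TTheory GRing.Theory Num.Theory.
Local Open Scope ring_scope.

Definition poch {R : realType} (a : R) (k : nat) : R :=
  \prod_(i < k) (a + i%:R).

Definition gbinom {R : realType} (g : R) (m : int) : R :=
  match m with
  | Posz k => (\prod_(i < k) (g - i%:R)) / (k`!)%:R
  | Negz _ => 0
  end.

(* Symmetric Jacobi polynomial
   P_n^{(a,a)}(x) = binom(n+a,n) 2F1(-n, n+2a+1; a+1; (1-x)/2),
   the terminating hypergeometric series written as a finite sum (k <= n;
   the terms with k > n vanish since (-n)_k = 0). *)
Definition jacobiP {R : realType} (a : R) (n : nat) : {poly R} :=
  gbinom (n%:R + a) n *:
  \sum_(k < n.+1)
    ((poch (- n%:R) k * poch (n%:R + 2 * a + 1) k)
       / (poch (a + 1) k * (k`!)%:R))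
    *: ((2^-1)%:P * (1 - 'X)) ^+ k.

Definition koornC0 {R : realType} (a M : R) (n : nat) : R :=
  1 + M * (2 * n%:R / (a + 1)) * gbinom (n%:R + 2 * a + 1) n
    + 4 * M ^+ 2 * (gbinom (n%:R + 2 * a + 1) (n%:Z - 1)) ^+ 2.

Definition koornC1 {R : realType} (a M : R) (n : nat) : R :=
  2 * M / (2 * a + 1) * gbinom (n%:R + 2 * a) n
  + 2 * M ^+ 2 / (a + 1) * gbinom (n%:R + 2 * a) (n%:Z - 1)
      * gbinom (n%:R + 2 * a + 1) n.

Definition koornwinderP {R : realType} (a M : R) (n : nat) : {poly R} :=
  koornC0 a M n *: jacobiP a n - koornC1 a M n *: ('X * (jacobiP a n)^`()).

Definition bcoef {R : realType} (n i : nat) (x : R) : R :=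
  if i == 0%N then (1 - (-1) ^+ n) / 2
  else (2 ^+ i.-1) / (i`!)%:R * (- x) ^+ i.

(* Main.v *)
Require Import Defs.
From HB Require Import structures.
From mathcomp Require Import all_boot all_order all_algebra.
From mathcomp Require Import all_classical all_reals.
From mathcomp Require Import ring lra.
Import Order.TTheory GRing.Theory Num.Theory.
Local Open Scope ring_scope.

Definition fco {R : realType} (a : R) (n k : nat) : R :=
  ((poch (- n%:R) k * poch (n%:R + 2 * a + 1) k)
       / (poch (a + 1) k * (k`!)%:R)).

Definition Fp {R : realType} (a : R) (n : nat) : {poly R} :=
  \poly_(k < n.+1) fco a n k.

Definition Lop {R : realType} (a : R) (n : nat) (p : {poly R}) : {poly R} :=
  'X * p^`()^`() - 'X^2 * p^`()^`() + (a + 1) *: p^`()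
  - (2 * (a + 1)) *: ('X * p^`()) + (n%:R * (n%:R + 2 * a + 1)) *: p.

Lemma pochS {R : realType} (x : R) k : poch x k.+1 = poch x k * (x + k%:R).
Proof. by rewrite /poch big_ord_recr. Qed.

Lemma poch_gt0 {R : realType} (x : R) k : 0 < x -> 0 < poch x k.
Proof.
move=> x0; apply: prodr_gt0 => i _.
by apply: (lt_le_trans x0); rewrite lerDl ler0n.
Qed.

Lemma poch_neg0 {R : realType} (n m : nat) : (n < m)%N -> poch (- n%:R : R) m = 0.
Proof.
elim: m => // m IH; rewrite ltnS leq_eqVlt => /orP[/eqP->|/IH h].
  by rewrite pochS addNr mulr0.
by rewrite pochS h mul0r.
Qed.

Lemma coefFp {R : realType} (a : R) n k : (Fp a n)`_k = fco a n k.
Proof.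
rewrite coef_poly; case: ltnP => // h.
by rewrite /fco poch_neg0 ?mul0r.
Qed.

Lemma coefL {R : realType} (a : R) n p k : (Lop a n p)`_k =
  (k.+1)%:R * (k%:R + (a + 1)) * p`_k.+1
  + (n%:R - k%:R) * (n%:R + k%:R + 2 * a + 1) * p`_k.
Proof.
rewrite /Lop !(coefD, coefN, coefZ) coefXnM !coefXM !coef_deriv.
case: k => [|[|k]] /=.
- move: (p`_0) (p`_1) => u v; ring.
- move: (p`_1) (p`_2) => u v; ring.
- rewrite !subSS subn0; move: (p`_k.+2) (p`_k.+3) => u v.
  ring.
Qed.

Lemma LFp {R : realType} (a : R) n : -1 < a -> Lop a n (Fp a n) = 0.
Proof.
move=> ha; apply/polyP => k; rewrite coefL !coefFp coef0 /fco !pochS factS natrM.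
have c0 : 0 < a + 1 by lra.
have h1 : poch (a + 1) k != 0 by rewrite gt_eqF // poch_gt0.
have h2 : a + 1 + k%:R != 0.
  by rewrite gt_eqF // ltr_wpDr // ler0n.
have h3 : (k`!)%:R != 0 :> R by rewrite pnatr_eq0 -lt0n fact_gt0.
have h4 : (k.+1)%:R != 0 :> R by rewrite pnatr_eq0.
move: h1 h2 h3 h4; move: (poch (a + 1) k) (poch (- n%:R) k) (poch (n%:R + 2 * a + 1) k) (k`!)%:R => A B C D h1 h2 h3 h4.
rewrite -natr1 in h4 *.
field; by rewrite h1 h2 h3 h4.
Qed.

Lemma fcon_neq0 {R : realType} (a : R) n : -1 < a -> fco a n n != 0.
Proof.
move=> ha; rewrite /fco; apply: mulf_neq0; [apply: mulf_neq0|rewrite invr_eq0; apply: mulf_neq0].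
- apply/prodf_neq0 => i _.
  by rewrite addrC subr_eq0 eqr_nat neq_ltn ltn_ord.
- apply/prodf_neq0 => i _; apply/lt0r_neq0.
  have h1 : (1 <= n)%N by apply: (leq_ltn_trans (leq0n i)); exact: ltn_ord.
  have h2 : 1 <= n%:R :> R by rewrite (ler_nat R 1 n).
  have h3 : 0 <= i%:R :> R by rewrite ler0n.
  lra.
- by rewrite gt_eqF // poch_gt0 //; lra.
- by rewrite pnatr_eq0 -lt0n fact_gt0.
Qed.

Lemma sizeFp {R : realType} (a : R) n : -1 < a -> size (Fp a n) = n.+1.
Proof. by move=> ha; rewrite /Fp size_poly_eq // fcon_neq0. Qed.

Lemma LopB {R : realType} (a : R) n p q s :
  Lop a n (p - s *: q) = Lop a n p - s *: Lop a n q.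
Proof.
rewrite /Lop !(derivB, derivZ) -!mul_polyC; ring.
Qed.

Lemma comp_polyN' {R : realType} (p q : {poly R}) : (- p) \Po q = - (p \Po q).
Proof. by rewrite -sub0r comp_polyB comp_poly0 sub0r. Qed.

Lemma LopComp {R : realType} (a : R) n p :
  Lop a n (p \Po (1 - 'X)) = (Lop a n p) \Po (1 - 'X).
Proof.
have d1 : (1 - 'X : {poly R})^`() = -1 by rewrite derivB -polyC1 derivC derivX sub0r.
rewrite /Lop !deriv_comp d1 !mulrN1 !derivN deriv_comp d1 mulrN1 opprK.
rewrite !(comp_polyD, comp_polyN', comp_polyM, comp_polyZ, comp_polyX, comp_Xn_poly).
rewrite -!mul_polyC; ring.
Qed.

Lemma Lop_uniq {R : realType} (a : R) n G :
  -1 < a -> Lop a n G = 0 -> (size G <= n)%N -> G = 0.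
Proof.
move=> ha hL hs; apply/eqP; apply/negPn/negP => hG.
set d := (size G).-1.
have hd : size G = d.+1 by rewrite /d prednK // lt0n size_poly_eq0.
have hdn : (d < n)%N by rewrite -hd.
have := congr1 (fun p : {poly R} => p`_d) hL.
rewrite /= coefL coef0 (nth_default 0 (_ : (size G <= d.+1)%N)) ?hd // mulr0 add0r.
apply/eqP; apply: mulf_neq0; [apply: mulf_neq0|].
- by rewrite subr_eq0 eqr_nat eq_sym neq_ltn hdn.
- apply/lt0r_neq0.
  have h1 : (1 <= n)%N by apply: (leq_ltn_trans (leq0n d)).
  have h2 : 1 <= n%:R :> R by rewrite (ler_nat R 1 n).
  have h3 : 0 <= d%:R :> R by rewrite ler0n.
  lra.
- have : lead_coef G != 0 by rewrite lead_coef_eq0.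
  by rewrite lead_coefE hd.
Qed.

Lemma size1X {R : realType} : size (1 - 'X : {poly R}) = 2.
Proof. by rewrite -opprB size_polyN -polyC1 size_XsubC. Qed.

Lemma lead1X {R : realType} : lead_coef (1 - 'X : {poly R}) = -1.
Proof. by rewrite -opprB lead_coefN -polyC1 lead_coefXsubC. Qed.

Lemma parityF {R : realType} (a : R) n : -1 < a ->
  Fp a n \Po (1 - 'X) = (-1) ^+ n *: Fp a n.
Proof.
move=> ha; apply/eqP; rewrite -subr_eq0; apply/eqP; apply: (Lop_uniq a n _ ha).
  by rewrite LopB LopComp LFp // comp_poly0 scaler0 subr0.
have sH : size (Fp a n \Po (1 - 'X)) = n.+1 by rewrite size_comp_poly2 ?size1X // sizeFp.
apply/leq_sizeP => j; rewrite leq_eqVlt => /orP[/eqP<-|hj].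
  have := @lead_coef_comp R (Fp a n) (1 - 'X)%R.
  rewrite size1X lead1X sizeFp // => /(_ isT).
  rewrite !lead_coefE sH sizeFp //= => e.
  by rewrite coefB coefZ e mulrC subrr.
rewrite coefB coefZ !nth_default ?mulr0 ?subr0 // ?sH ?sizeFp //.
Qed.

Lemma jacobiE {R : realType} (a : R) n : -1 < a ->
  jacobiP a n = gbinom (n%:R + a) n *: (Fp a n \Po ((2^-1)%:P * (1 - 'X))).
Proof.
move=> ha; rewrite /jacobiP comp_polyE sizeFp //; congr (_ *: _).
by apply: eq_bigr => i _; rewrite coefFp.
Qed.

Lemma jacobi_par {R : realType} (a : R) n : -1 < a ->
  jacobiP a n \Po (- 'X) = (-1) ^+ n *: jacobiP a n.
Proof.
move=> ha.
have e : ((2^-1)%:P * (1 - 'X)) \Po (- 'X) = (1 - 'X) \Po ((2^-1)%:P * (1 - 'X) : {poly R}).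
  rewrite comp_polyM !comp_polyB !comp_polyX -polyC1 !comp_polyC polyC1.
  have h2 : (1 : {poly R}) = (2^-1)%:P + (2^-1)%:P.
    by rewrite -polyCD -polyC1; congr _%:P; field.
  transitivity ((2^-1)%:P + (2^-1)%:P - (2^-1)%:P * (1 - 'X) : {poly R}); first ring.
  by rewrite -h2.
rewrite jacobiE // comp_polyZ -comp_polyA e comp_polyA parityF // comp_polyZ.
by rewrite !scalerA mulrC.
Qed.

Lemma koorn_par {R : realType} (a M : R) n : -1 < a ->
  koornwinderP a M n \Po (- 'X) = (-1) ^+ n *: koornwinderP a M n.
Proof.
move=> ha.
have dJ := congr1 deriv (jacobi_par a n ha).
rewrite derivZ deriv_comp derivN derivX mulrN1 in dJ.
have dJ' : (jacobiP a n)^`() \Po (- 'X) = - ((-1) ^+ n *: (jacobiP a n)^`()).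
  by rewrite -dJ opprK.
rewrite /koornwinderP comp_polyB (comp_polyZ (koornC0 a M n)) (comp_polyZ (koornC1 a M n)).
rewrite comp_polyM comp_polyX dJ' jacobi_par //.
rewrite -!mul_polyC; ring.
Qed.

Theorem mainTheorem5 (R : realType) (a M : R) (n : nat) :
  -1 < a -> a != - (2^-1) -> 0 <= M ->
  forall (x : R) (N : nat), (size (koornwinderP a M n) <= N)%N ->
    \sum_(i < N) bcoef n i x * ((koornwinderP a M n)^`(i)).[x] = 0.
Proof.
move=> ha _ _ x N hN.
have py := congr1 (fun p : {poly R} => p.[x]) (koorn_par a M n ha).
rewrite /= horner_comp hornerN hornerX hornerZ in py.
move: py hN; set y := koornwinderP a M n => py hN.
have tay := nderiv_taylor_wide (@mulrC _ x (- (2 * x))) hN.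
have ex : x + - (2 * x) = - x by ring.
rewrite ex py in tay.
set b0 := (1 - (-1) ^+ n) / 2 : R.
have term : forall i : 'I_N, bcoef n i x * (y^`(i)).[x] =
   2^-1 * ((y^`N(i)).[x] * (- (2 * x)) ^+ i)
   + (if (i : nat) == 0%N then (b0 - 2^-1) * y.[x] else 0).
  move=> [[|j] hj] /=.
    rewrite /bcoef /= ?derivn0 ?nderivn0 expr0 mulr1 -/b0.
    move: (y.[x]) => Y; ring.
  rewrite /bcoef /= addr0 -derivnS nderivn_def hornerMn -(mulr_natr (y^`N(j.+1)).[x]).
  have hF : ((j.+1)`!)%:R != 0 :> R by rewrite pnatr_eq0 -lt0n fact_gt0.
  rewrite -mulrN exprMn (exprS 2).
  move: ((y^`N(j.+1)).[x]) ((-x) ^+ j.+1) => V W.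
  by field.
rewrite (eq_bigr _ (fun i _ => term i)) big_split /= -mulr_sumr -tay.
case: N term tay hN => [|N] term tay hN.
  have y0 : y = 0 by apply/eqP; rewrite -size_poly_eq0 -leqn0.
  by rewrite !big_ord0 y0 horner0 !(mulr0, addr0).
rewrite big_ord_recl /= big1 ?addr0 // -/b0.
rewrite /b0; move: (y.[x]) => Y; ring.
Qed.
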